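(* Let $\mathcal V$ be a variety of $\tau$-algebras axiomatised by the equational theory $T$, and let $\mathbf{Cl}(\mathcal V)$ be the clone $\mathcal V$-algebra. Then: (1) $\mathbf{Cl}(\mathcal V)$ is a finite dimensional clone $\tau$-algebra; (2) the congruence lattice $\mathrm{Con}\,\mathbf{Cl}(\mathcal V)$ is isomorphic to the lattice $L(T)$ of all equational theories (of type $\tau$) containing $T$; (3) if $w\in F_{\mathcal V}$ has dimension $n>0$ in $\mathbf{Cl}(\mathcal V)$, then there is a $\tau$-term $t$ whose variables are among $v_1,\dots,v_n$ with $t\in w$; (4) if $w\in F_{\mathcal V}$ has dimension $0$ in $\mathbf{Cl}(\mathcal V)$, then there is a $\tau$-term $t(v_1)$ (with variables among $v_1$) with $t(v_1)\in w$ and $\mathcal V\models t(v_1)=t(v_2)$; (5) $\mathbf{Cl}(\mathcal V)$ is isomorphic to the block algebra $(\mathrm{Clo}\,\mathbf F_{\mathcal V})^\top$.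
   Context: $\mathbf F_{\mathcal V}$ is the free algebra of $\mathcal V$ over the countable set $I=\{v_1,v_2,\dots\}$ of generators; its elements are equivalence classes of $\tau$-terms in the variables $v_i$ modulo $\mathcal V$-equality. The clone $\mathcal V$-algebra is $\mathbf{Cl}(\mathcal V)=(\mathbf F_{\mathcal V},q_n^{\mathbf F}\ (n\ge0),\mathsf e_i^{\mathbf F}\ (i\ge1))$ with $\mathsf e_i^{\mathbf F}=v_i$ and $q_n^{\mathbf F}(a,b_1,\dots,b_n)=s(a)$, where $s$ is the unique endomorphism of $\mathbf F_{\mathcal V}$ with $s(v_i)=b_i$ ($i\le n$) and $s(v_i)=v_i$ ($i>n$). A clone $\tau$-algebra is an algebra $(C,\sigma\ (\sigma\in\tau),q_n,\mathsf e_i)$, $\mathsf e_i$ nullary and $q_n$ of arity $n+1$, satisfying: (C1) $q_n(\mathsf e_i,x_1,\dots,x_n)=x_i$ ($i\le n$); (C2) $q_n(\mathsf e_j,x_1,\dots,x_n)=\mathsf e_j$ ($j>n$); (C3) $q_n(x,\mathsf e_1,\dots,\mathsf e_n)=x$; (C4) $q_k(x,y_1,\dots,y_k)=q_n(x,y_1,\dots,y_k,\mathsf e_{k+1},\dots,\mathsf e_n)$ ($n>k$); (C5) $q_n(q_n(x,\mathbf y),\mathbf z)=q_n(x,q_n(y_1,\mathbf z),\dots,q_n(y_n,\mathbf z))$; (C6) $q_n(\sigma(x_1,\dots,x_k),\mathbf y)=\sigma(q_n(x_1,\mathbf y),\dots,q_n(x_k,\mathbf y))$. An element $a$ is independent of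 $\mathsf e_n$ if $q_n(a,\mathsf e_1,\dots,\mathsf e_{n-1},\mathsf e_{n+1})=a$; its dimension is $0$ if it depends on no $\mathsf e_n$, otherwise the largest $n$ it depends on (infinite if infinitely many); finite dimensional means all elements have finite dimension. $\mathrm{Clo}\,\mathbf F_{\mathcal V}$ is the clone of term operations of $\mathbf F_{\mathcal V}$ (all operations $\mathbf a\mapsto t(\mathbf a)$ for $\tau$-terms $t$ in at most $k$ variables, on $F^k$, together with their restrictions obtained by dropping fictitious last arguments, including nullary ones). With $\omega=\{1,2,\dots\}$, the top extension of $f:A^n\to A$ is $f^\top(s)=f(s_1,\dots,s_n)$ for $s\in A^\omega$; $(\mathrm{Clo}\,\mathbf F_{\mathcal V})^\top=\{f^\top: f\in\mathrm{Clo}\,\mathbf F_{\mathcal V}\}$ viewed as a subalgebra of the full functional clone $\tau$-algebra with value domain $\mathbf F_{\mathcal V}$, whose universe is all maps $F_{\mathcal V}^\omega\to F_{\mathcal V}$, with $\mathsf e_i(s)=s_i$, $q_n(\varphi,\psi_1,\dots,\psi_n)(s)=\varphi(s[\psi_1(s),\dots,\psi_n(s)])$ ($s[b_1,\dots,b_n]$ replacing the first $n$ entries), $\sigma(\psi_1,\dots,\psi_k)(s)=\sigma^{\mathbf F}(\psi_1(s),\dots,\psi_k(s))$. *)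

(* Defs.v *)
(* INDEXING CONVENTION: everything is 0-based.  The paper's variable v_i
   (i >= 1) is [Var (i-1)], the paper's constant e_i is [e (i-1)], the
   argument y_i of q_n is [y (i-1)] with [y : 'I_n -> C], and the paper's
   omega = {1,2,...} is [nat] (s_i is [s (i-1)]). *)
From Stdlib Require Import ClassicalEpsilon.
From mathcomp Require Import all_boot.

Inductive term (Op : Type) (ar : Op -> nat) : Type :=
| Var : nat -> term Op ar
| App : forall o : Op, ('I_(ar o) -> term Op ar) -> term Op ar.
Arguments Var {Op ar}.
Arguments App {Op ar}.





(* s[b_1,...,b_n]: replace the first n entries of d by b. *)
Definition pad {C : Type} {n : nat} (b : 'I_n -> C) (d : nat -> C) (j : nat) : C :=
  match (insub j : option 'I_n) with Some i => b i | None => d j end.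

Section Syntax.
Context {Op : Type} {ar : Op -> nat}.
Local Notation term := (term Op ar).

Fixpoint vars_lt (n : nat) (t : term) : Prop :=
  match t with
  | Var i => i < n
  | App o ts => forall i, vars_lt n (ts i)
  end.

Fixpoint subst (sb : nat -> term) (t : term) : term :=
  match t with
  | Var i => sb i
  | App o ts => App o (fun i => subst sb (ts i))
  end.

Fixpoint eval {A : Type} (I : forall o : Op, ('I_(ar o) -> A) -> A)
    (v : nat -> A) (t : term) : A :=
  match t with
  | Var i => v i
  | App o ts => I o (fun i => eval I v (ts i))
  end.

Definition is_eq_theory (E : term -> term -> Prop) : Prop :=
  [/\ (forall t, E t t),
      (forall s t, E s t -> E t s),
      (forall s t u, E s t -> E t u -> E s u),
      (forall o (ss ts : 'I_(ar o) -> term),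
          (forall i, E (ss i) (ts i)) -> E (App o ss) (App o ts)) &
      (forall sb s t, E s t -> E (subst sb s) (subst sb t))].

Definition models {A : Type} (I : forall o : Op, ('I_(ar o) -> A) -> A)
    (E : term -> term -> Prop) : Prop :=
  forall s t, E s t -> forall v, eval I v s = eval I v t.

Definition eqV (E : term -> term -> Prop) (s t : term) : Prop :=
  forall (A : Type) (I : forall o : Op, ('I_(ar o) -> A) -> A),
    models I E -> forall v, eval I v s = eval I v t.

Definition incl_rel {X : Type} (R S : X -> X -> Prop) : Prop :=
  forall x y, R x y -> S x y.

End Syntax.

Section FreeAlgebra.
Context {Op : Type} {ar : Op -> nat}.
Local Notation term := (term Op ar).
Variable T : term -> term -> Prop.

(* F_V: classes of terms modulo V-equality *)
Definition Fr : Type := {P : term -> Prop | exists t, P = eqV T t}.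

Definition cls (t : term) : Fr := exist _ (eqV T t) (ex_intro _ t erefl).

Definition rep (w : Fr) : term :=
  proj1_sig (constructive_indefinite_description _ (proj2_sig w)).

Definition Cl_op (o : Op) (ws : 'I_(ar o) -> Fr) : Fr :=
  cls (App o (fun i => rep (ws i))).

(* q_n^F(a, b_1..b_n) = s(a), s the endomorphism with v_i |-> b_i (i <= n),
   v_i |-> v_i (i > n); computed on representatives by substitution. *)
Definition Cl_q (n : nat) (a : Fr) (bs : 'I_n -> Fr) : Fr :=
  cls (subst (pad (fun i => rep (bs i)) Var) (rep a)).

Definition Cl_e (i : nat) : Fr := cls (Var i).

End FreeAlgebra.
Arguments Fr {Op ar} T.
Arguments cls {Op ar} T t.
Arguments rep {Op ar} T w.
Arguments Cl_op {Op ar} T o ws.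
Arguments Cl_q {Op ar} T n a bs.
Arguments Cl_e {Op ar} T i.

Section CloneAlgebra.
Context {Op : Type} {ar : Op -> nat} {C : Type}.
Variables (sg : forall {o : Op}, ('I_(ar o) -> C) -> C)
          (q : forall {n : nat}, C -> ('I_n -> C) -> C)
          (e : nat -> C).

Definition is_clone_algebra : Prop :=
  (forall n (x : 'I_n -> C) (i : 'I_n), q (e i) x = x i) /\
      (forall n (x : 'I_n -> C) j, n <= j -> q (e j) x = e j) /\
      (forall n (x : C), q x (fun i : 'I_n => e i) = x) /\
      (forall k n (x : C) (y : 'I_k -> C), k < n ->
                  q x y = q x (fun i : 'I_n => pad y e i)) /\
      (forall n (x : C) (y z : 'I_n -> C),
                  q (q x y) z = q x (fun i => q (y i) z)) /\
      (forall n o (xs : 'I_(ar o) -> C) (y : 'I_n -> C),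
                  q (sg xs) y = sg (fun i => q (xs i) y)).

(* a is independent of e_{k+1} (0-based index k):
   q_{k+1}(a, e_1, ..., e_k, e_{k+2}) = a *)
Definition independent (a : C) (k : nat) : Prop :=
  q a (fun i : 'I_k.+1 => if (i : nat) < k then e i else e k.+1) = a.

(* a has (finite) dimension d: d = 0 if a depends on no e_n, otherwise d is
   the largest n such that a depends on e_n. *)
Definition has_dim (a : C) (d : nat) : Prop :=
  (d = 0 /\ forall k, independent a k) \/
  (0 < d /\ ~ independent a d.-1 /\ forall k, d <= k -> independent a k).

Definition finite_dimensional : Prop := forall a : C, exists d, has_dim a d.

Definition is_congruence (R : C -> C -> Prop) : Prop :=
  [/\ (forall x, R x x), (forall x y, R x y -> R y x),
      (forall x y z, R x y -> R y z -> R x z),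
      (forall o (xs ys : 'I_(ar o) -> C),
          (forall i, R (xs i) (ys i)) -> R (sg xs) (sg ys)) &
      (forall n (x y : C) (bs cs : 'I_n -> C),
          R x y -> (forall i, R (bs i) (cs i)) -> R (q x bs) (q y cs))].

End CloneAlgebra.

Section Functional.
Context {Op : Type} {ar : Op -> nat} {A : Type}.
Variable opA : forall {o : Op}, ('I_(ar o) -> A) -> A.

Definition ff_e (i : nat) : (nat -> A) -> A := fun s => s i.
Definition ff_q (n : nat) (phi : (nat -> A) -> A) (psi : 'I_n -> (nat -> A) -> A)
  : (nat -> A) -> A := fun s => phi (pad (fun i => psi i s) s).
Definition ff_op (o : Op) (psi : 'I_(ar o) -> (nat -> A) -> A) : (nat -> A) -> A :=
  fun s => opA (fun i => psi i s).

(* Clo A: an n-ary operation f is in the clone of term operations iff it is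
   the term operation a |-> t(a) on A^k of a term t in at most k >= n
   variables, restricted to its first n arguments, the last k-n arguments
   being fictitious (n = k gives the term operations themselves). *)
Definition in_Clo (n : nat) (f : ('I_n -> A) -> A) : Prop :=
  exists k (t : term Op ar), [/\ n <= k, vars_lt k t &
    forall (b : 'I_k -> A) (d : nat -> A),
      eval (@opA) (pad b d) t = f (fun i : 'I_n => pad b d i)].

Definition top (n : nat) (f : ('I_n -> A) -> A) : (nat -> A) -> A :=
  fun s => f (fun i : 'I_n => s i).

Definition in_block (phi : (nat -> A) -> A) : Prop :=
  exists n (f : ('I_n -> A) -> A), in_Clo n f /\ phi = top n f.

End Functional.

(* Main.v *)
Require Import Defs.
From mathcomp Require Import all_boot.
From Stdlib Require Import FunctionalExtensionality PropExtensionality ProofIrrelevance ClassicalEpsilon Classical.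

Set Implicit Arguments.

Section Basics.
Variables (Op : Type) (ar : Op -> nat).
Local Notation term := (term Op ar).

Lemma subst_comp (s1 s2 : nat -> term) t :
  subst s2 (subst s1 t) = subst (fun i => subst s2 (s1 i)) t.
Proof.
elim: t => [n|o ts IH] //=; congr (App o); apply: functional_extensionality => i; exact: IH.
Qed.

Lemma subst_Var (t : term) : subst Var t = t.
Proof.
elim: t => [n|o ts IH] //=; congr (App o); apply: functional_extensionality => i; exact: IH.
Qed.

Lemma subst_ext_lt m (s1 s2 : nat -> term) t : vars_lt m t ->
  (forall i, i < m -> s1 i = s2 i) -> subst s1 t = subst s2 t.
Proof.
elim: t => [n|o ts IH] /= Hv Hs; first exact: Hs.
congr (App o); apply: functional_extensionality => i; exact: IH.
Qed.

Lemma eval_ext_lt A (I : forall o : Op, ('I_(ar o) -> A) -> A) m (s1 s2 : nat -> A) t :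
  vars_lt m t -> (forall i, i < m -> s1 i = s2 i) -> eval I s1 t = eval I s2 t.
Proof.
elim: t => [n|o ts IH] /= Hv Hs; first exact: Hs.
congr (I o); apply: functional_extensionality => i; exact: IH.
Qed.

Lemma vars_lt_mono m m' (t : term) : m <= m' -> vars_lt m t -> vars_lt m' t.
Proof.
move=> Hm; elim: t => [n|o ts IH] /=; first by move=> H; exact: leq_trans H Hm.
move=> H i; exact: IH.
Qed.

Fixpoint bnd (t : term) : nat :=
  match t with
  | Var i => i.+1
  | App o ts => \max_(i < ar o) bnd (ts i)
  end.

Lemma vars_bnd (t : term) : vars_lt (bnd t) t.
Proof.
elim: t => [n|o ts IH] /=; first by [].
move=> i; apply: vars_lt_mono (IH i).
exact: (@leq_bigmax_cond _ _ (fun i => bnd (ts i)) i).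
Qed.

Lemma vars_subst m (sb : nat -> term) (t : term) : (forall i, vars_lt m (sb i)) -> vars_lt m (subst sb t).
Proof. move=> H; elim: t => [n|o ts IH] //=. Qed.

Lemma pad_lt C n (b : 'I_n -> C) d (i : 'I_n) : pad b d i = b i.
Proof. by rewrite /pad valK. Qed.

Lemma pad_ge C n (b : 'I_n -> C) d j : n <= j -> pad b d j = d j.
Proof. by move=> H; rewrite /pad insubF // ltnNge H. Qed.

Lemma pad_id C n (s : nat -> C) : pad (fun i : 'I_n => s i) s = s.
Proof.
apply: functional_extensionality => j; rewrite /pad.
by case: insubP => [i _ <-|].
Qed.

End Basics.

Section Quot.
Variables (X : Type) (E : X -> X -> Prop).
Hypotheses (Erefl : forall x, E x x) (Esym : forall x y, E x y -> E y x)
  (Etrans : forall x y z, E x y -> E y z -> E x z).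

Definition QT := {P : X -> Prop | exists t, P = E t}.
Definition qcls (t : X) : QT := exist _ (E t) (ex_intro _ t erefl).
Definition qrep (w : QT) : X :=
  proj1_sig (constructive_indefinite_description _ (proj2_sig w)).

Lemma E_ext s t : E s t -> E s = E t.
Proof.
move=> H; apply: functional_extensionality => u; apply: propositional_extensionality.
split=> H'; [apply: Etrans (Esym H) H' | exact: Etrans H H'].
Qed.

Lemma qcls_eq s t : qcls s = qcls t <-> E s t.
Proof.
split.
- move=> /(f_equal (@proj1_sig _ _)) /= ->; exact: Erefl.
- move=> /E_ext H; rewrite /qcls; move: (ex_intro _ s _) (ex_intro _ t _).
  rewrite H => p1 p2; congr exist; exact: proof_irrelevance.
Qed.

Lemma qcls_rep w : qcls (qrep w) = w.
Proof.
rewrite /qrep; case: (constructive_indefinite_description _ _) => t /= Ht.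
case: w Ht => P pf /= Ht; rewrite /qcls; move: (ex_intro _ t _) pf; rewrite -Ht => p1 p2.
congr exist; exact: proof_irrelevance.
Qed.

Lemma qrep_cls t : E (qrep (qcls t)) t.
Proof. by apply/qcls_eq; rewrite qcls_rep. Qed.

End Quot.

Section Theory.
Variables (Op : Type) (ar : Op -> nat) (T : term Op ar -> term Op ar -> Prop).
Local Notation term := (term Op ar).
Hypothesis HT : is_eq_theory T.

Lemma Trefl t : T t t. Proof. by case: HT => H _ _ _ _; apply: H. Qed.
Lemma Tsym s t : T s t -> T t s. Proof. by case: HT => _ H _ _ _; apply: H. Qed.
Lemma Ttrans s t u : T s t -> T t u -> T s u. Proof. by case: HT => _ _ H _ _; apply: H. Qed.
Lemma Tapp o (ss ts : 'I_(ar o) -> term) : (forall i, T (ss i) (ts i)) -> T (App o ss) (App o ts).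
Proof. by case: HT => _ _ _ H _; apply: H. Qed.
Lemma Tsub sb s t : T s t -> T (subst sb s) (subst sb t).
Proof. by case: HT => _ _ _ _ H; apply: H. Qed.

Lemma subst_T_pt (s1 s2 : nat -> term) t :
  (forall i, T (s1 i) (s2 i)) -> T (subst s1 t) (subst s2 t).
Proof. move=> H; elim: t => [n|o ts IH] /=; [exact: H | exact: Tapp]. Qed.

Lemma qT_eq s t : qcls T s = qcls T t <-> T s t.
Proof. exact: (@qcls_eq _ T Trefl Tsym Ttrans). Qed.
Lemma qT_rep t : T (qrep (qcls T t)) t.
Proof. exact: (@qrep_cls _ T Trefl Tsym Ttrans). Qed.

Definition qop o (ps : 'I_(ar o) -> QT T) : QT T := qcls T (App o (fun i => qrep (ps i))).

Lemma eval_qop v t : eval qop v t = qcls T (subst (fun j => qrep (v j)) t).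
Proof.
elim: t => [n|o ts IH] /=; first by rewrite qcls_rep.
rewrite /qop; apply/qT_eq; apply: Tapp => i; rewrite IH; exact: qT_rep.
Qed.

Lemma eqV_T s t : eqV T s t <-> T s t.
Proof.
split; last first.
  by move=> H A I HI v; apply: HI.
move=> H.
have HM : models qop T.
  by move=> s' t' H' v; rewrite !eval_qop; apply/qT_eq; exact: Tsub.
move: (H _ _ HM (fun j => qcls T (Var j))); rewrite !eval_qop => /qT_eq H'.
have Hpt : forall i, T (qrep (qcls T (Var i))) (Var i) by move=> i; exact: qT_rep.
have := @subst_T_pt _ _ s Hpt; have := @subst_T_pt _ _ t Hpt; rewrite !subst_Var => H1 H2.
exact: Ttrans (Tsym H2) (Ttrans H' H1).
Qed.
End Theory.
Arguments Tsym [Op ar T] HT [s t].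
Arguments Ttrans [Op ar T] HT [s t u].
Arguments Tsub [Op ar T] HT sb [s t].
Arguments Tapp [Op ar T] HT [o ss ts].
Arguments subst_T_pt [Op ar T] HT [s1 s2 t].

Lemma pad_lt2 C n (b : 'I_n -> C) d j (H : j < n) : pad b d j = b (Ordinal H).
Proof. by rewrite /pad insubT. Qed.

Lemma eval_subst Op ar A (I : forall o : Op, ('I_(ar o) -> A) -> A) v sb (t : term Op ar) :
  eval I v (subst sb t) = eval I (fun j => eval I v (sb j)) t.
Proof.
elim: t => [n|o ts IH] //=; congr (I o); apply: functional_extensionality => i; exact: IH.
Qed.

Section Main.
Variables (Op : Type) (ar : Op -> nat) (T : term Op ar -> term Op ar -> Prop).
Local Notation term := (term Op ar).
Hypothesis HT : is_eq_theory T.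
Local Notation cls := (cls T).
Local Notation rep := (rep T).

Lemma eqV_refl t : eqV T t t. Proof. by move=> A I _ v. Qed.
Lemma eqV_sym s t : eqV T s t -> eqV T t s. Proof. by move=> H A I HI v; rewrite (H A I HI v). Qed.
Lemma eqV_trans s t u : eqV T s t -> eqV T t u -> eqV T s u.
Proof. by move=> H H' A I HI v; rewrite (H A I HI v) (H' A I HI v). Qed.

Lemma cls_eq s t : cls s = cls t <-> T s t.
Proof.
rewrite -(eqV_T HT); exact: (@qcls_eq _ (eqV T) eqV_refl eqV_sym eqV_trans s t).
Qed.

Lemma cls_rep w : cls (rep w) = w.
Proof. exact: (@qcls_rep _ (eqV T) w). Qed.

Lemma rep_cls t : T (rep (cls t)) t.
Proof. by apply/cls_eq; rewrite cls_rep. Qed.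

Lemma cls_rep_eq t w : cls t = w -> T t (rep w).
Proof. by move=> <-; apply: Tsym HT _ _ (rep_cls t). Qed.


Local Notation Tr := (Trefl HT).
Local Notation Ts := (Tsym HT).
Local Notation Tt := (Ttrans HT).
Local Notation Tsb := (Tsub HT).
Local Notation Tpt := (subst_T_pt HT).

Lemma cloneCl : is_clone_algebra (Cl_op T) (Cl_q T) (Cl_e T).
Proof.
split; [|split; [|split; [|split; [|split]]]].
- move=> n x i; rewrite -[x i]cls_rep; apply/cls_eq.
  apply: Tt (Tsb _ (rep_cls _)) _; rewrite /= pad_lt; exact: Tr.
- move=> n x j Hj; rewrite /Cl_e; apply/cls_eq.
  apply: Tt (Tsb _ (rep_cls _)) _; rewrite /= pad_ge //; exact: Tr.
- move=> n x; rewrite -{2}(cls_rep x); apply/cls_eq.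
  rewrite -{2}(subst_Var (rep x)); apply: Tpt => j.
  rewrite /pad; case: insubP => [i _ <-|_]; [exact: rep_cls | exact: Tr].
- move=> k n x y Hkn; apply/cls_eq; apply: Tpt => j.
  case: (ltnP j n) => Hjn.
    rewrite (@pad_lt2 _ _ _ _ _ Hjn) /=.
    case: (ltnP j k) => Hjk.
      rewrite !(@pad_lt2 _ _ _ _ _ Hjk); exact: Tr.
    rewrite !pad_ge //; apply: Ts; exact: rep_cls.
  rewrite !pad_ge //; first exact: Tr.
  exact: leq_trans (ltnW Hkn) Hjn.
- move=> n x y z; apply/cls_eq.
  apply: Tt (Tsb _ (rep_cls _)) _; rewrite subst_comp; apply: Tpt => j.
  rewrite /pad; case: insubP => [i _ Hi|Hi] /=.
    apply: Ts; exact: rep_cls.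
  rewrite insubF /=; [exact: Tr | exact: negbTE Hi].
- move=> n o xs y; apply/cls_eq.
  apply: Tt (Tsb _ (rep_cls _)) _; rewrite /=; apply: (@Tapp _ _ _ HT o) => i.
  apply: Ts; exact: rep_cls.
Qed.


Local Notation indep := (independent (Cl_q T) (Cl_e T)).
Local Notation hdim := (has_dim (Cl_q T) (Cl_e T)).

Definition rho k : nat -> term := fun j => if j == k then Var k.+1 else Var j.

Lemma indep_cls w k : Cl_q T k.+1 w (fun i : 'I_k.+1 => if (i:nat) < k then Cl_e T i else Cl_e T k.+1)
  = cls (subst (rho k) (rep w)).
Proof.
apply/cls_eq; apply: Tpt => j; case: (ltnP j k.+1) => Hj.
  rewrite (@pad_lt2 _ _ _ _ _ Hj) /= /rho; case: (ltnP j k) => Hjk.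
    rewrite (ltn_eqF Hjk); exact: rep_cls.
  have -> : j = k by apply/eqP; rewrite eqn_leq Hjk -ltnS Hj.
  rewrite eqxx ?ltnn; exact: rep_cls.
rewrite pad_ge // /rho (gtn_eqF Hj); exact: Tr.
Qed.

Lemma indep_iff w k : indep w k <-> T (rep w) (subst (rho k) (rep w)).
Proof.
rewrite /independent indep_cls; split => H.
  exact: Ts (cls_rep_eq H).
rewrite -{2}(cls_rep w); apply/cls_eq; exact: Ts H.
Qed.

Lemma indep_any w k (H : indep w k) t (Ht : cls t = w) s :
  T t (subst (fun j => if j == k then s else Var j) t).
Proof.
move/indep_iff: H => H; have Ht' := cls_rep_eq Ht.
have H1 : T t (subst (rho k) t) := Tt Ht' (Tt H (Tsb _ (Ts Ht'))).
have H2 := Tsb (fun j => if j == k then s else Var j) H1; rewrite subst_comp in H2.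
have E : (fun j => subst (fun j => if j == k then s else Var j) (rho k j)) = rho k.
  apply: functional_extensionality => j; rewrite /rho.
  case: (eqVneq j k) => [_|Hjk] /=; [by rewrite (gtn_eqF (ltnSn k)) | by rewrite (negbTE Hjk)].
rewrite E in H2; exact: Tt H1 (Ts H2).
Qed.

Lemma indep_large w k : bnd (rep w) <= k -> indep w k.
Proof.
move=> Hk; apply/indep_iff.
rewrite (@subst_ext_lt _ _ (bnd (rep w)) (rho k) Var (rep w) (vars_bnd _)) ?subst_Var.
  exact: Tr.
move=> i Hi; by rewrite /rho (ltn_eqF (leq_trans Hi Hk)).
Qed.

Lemma findim : finite_dimensional (Cl_q T) (Cl_e T).
Proof.
move=> w; suff: forall m, (forall k, m <= k -> indep w k) -> exists d, hdim w d.
  by move=> H; apply: (H (bnd (rep w))) => k Hk; exact: indep_large Hk.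
elim=> [|m IH] H.
  by exists 0; left; split=> // k; exact: H.
case: (classic (indep w m)) => Hm.
  apply: IH => k; rewrite leq_eqVlt; case/orP => [/eqP <- //|]; exact: H.
by exists m.+1; right; split.
Qed.

Lemma reduce w d : 0 < d -> (forall k, d <= k -> indep w k) -> exists t, vars_lt d t /\ cls t = w.
Proof.
move=> Hd Hind; set t0 := rep w; set m := bnd t0.
pose sg j := fun i => if (d <= i) && (i < j) then Var 0 else (Var i : term).
have Hj : forall j, T t0 (subst (sg j) t0).
  elim=> [|j IH].
    have -> : sg 0 = Var by apply: functional_extensionality => i; rewrite /sg ltn0 andbF.
    rewrite subst_Var; exact: Tr.
  case: (ltnP j d) => Hjd.
    have -> : sg j.+1 = sg j; last exact: IH.
    apply: functional_extensionality => i; rewrite /sg ltnS.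
    case: (eqVneq i j) => [->|Hij]; first by rewrite ltnn leqNgt Hjd.
    by rewrite [i <= j]leq_eqVlt (negbTE Hij).
  have Hcls : cls (subst (sg j) t0) = w.
    by rewrite -[RHS]cls_rep; apply/cls_eq; exact: Ts IH.
  have H2 := indep_any (Hind j Hjd) Hcls (Var 0); rewrite subst_comp in H2.
  have E : (fun i => subst (fun j0 => if j0 == j then Var 0 else Var j0) (sg j i)) = sg j.+1.
    apply: functional_extensionality => i; rewrite /sg ltnS.
    case: (eqVneq i j) => [->|Hij]; first by rewrite ltnn andbF /= eqxx Hjd leqnn.
    rewrite [i <= j]leq_eqVlt (negbTE Hij) /=; case: ifP => _ /=; first by case: (0 == j).
    by rewrite (negbTE Hij).
  rewrite E in H2; exact: Tt IH H2.
exists (subst (fun i => if d <= i then Var 0 else Var i) t0); split.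
  apply: vars_subst => i; case: ifP => /= [_|]; first exact: Hd.
  by rewrite leqNgt => /negbFE.
rewrite -[RHS]cls_rep; apply/cls_eq; apply: Ts.
have E2 : subst (sg m) t0 = subst (fun i => if d <= i then Var 0 else Var i) t0.
  apply: (@subst_ext_lt _ _ m _ _ t0 (vars_bnd t0)) => i Him; by rewrite /sg Him andbT.
rewrite -E2; exact: Hj m.
Qed.

Lemma part3 (w : Fr T) (n : nat) : 0 < n -> hdim w n ->
     exists t : term, vars_lt n t /\ cls t = w.
Proof.
move=> Hn [[Hn0 _]|[_ [_ H]]]; [by rewrite Hn0 in Hn | exact: reduce Hn H].
Qed.

Lemma part4 (w : Fr T) : hdim w 0 ->
     exists t : term, [/\ vars_lt 1 t, cls t = w &
       eqV T t (subst (fun j => if j == 0 then Var 1 else Var j) t)].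
Proof.
move=> [[_ H]|[H _]] //.
have [t [Hv Hc]] := @reduce w 1 (ltn0Sn 0) (fun k _ => H k).
exists t; split=> //; apply/(eqV_T HT); exact: (@indep_any w 0 (H 0) t Hc (Var 1)).
Qed.


Lemma cls_App o ts : cls (App o ts) = Cl_op T o (fun i => cls (ts i)).
Proof. apply/cls_eq; apply: (@Tapp _ _ _ HT o) => i; apply: Ts; exact: rep_cls. Qed.

Lemma cls_subst m sb s : vars_lt m s ->
  cls (subst sb s) = Cl_q T m (cls s) (fun i : 'I_m => cls (sb i)).
Proof.
move=> Hv; apply/cls_eq; apply: Ts; apply: Tt (Tsb _ (rep_cls s)) _.
have -> : subst sb s = subst (pad (fun i : 'I_m => sb i) Var) s.
  apply: (@subst_ext_lt _ _ m _ _ s Hv) => j Hj; by rewrite (@pad_lt2 _ _ _ _ _ Hj).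
apply: Tpt => j; rewrite /pad; case: insubP => [i _ _|_]; [exact: rep_cls | exact: Tr].
Qed.

Lemma part2 :
  exists (f : (Fr T -> Fr T -> Prop) -> (term -> term -> Prop))
          (g : (term -> term -> Prop) -> (Fr T -> Fr T -> Prop)),
     [/\ (forall R, is_congruence (Cl_op T) (Cl_q T) R ->
            is_eq_theory (f R) /\ incl_rel T (f R)),
         (forall E, is_eq_theory E -> incl_rel T E ->
            is_congruence (Cl_op T) (Cl_q T) (g E)),
         (forall R, is_congruence (Cl_op T) (Cl_q T) R -> g (f R) = R),
         (forall E, is_eq_theory E -> incl_rel T E -> f (g E) = E) &
         (forall R R', is_congruence (Cl_op T) (Cl_q T) R ->
            is_congruence (Cl_op T) (Cl_q T) R' ->
            (incl_rel R R' <-> incl_rel (f R) (f R')))].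
Proof.
exists (fun R s t => R (cls s) (cls t)), (fun E a b => E (rep a) (rep b)); split.
- move=> R [Rr Rs Rt Rop Rq]; split; last by move=> s t /cls_eq ->.
  split.
  + move=> t; exact: Rr.
  + move=> s t; exact: Rs.
  + move=> s t u; exact: Rt.
  + move=> o ss ts H; rewrite !cls_App; exact: Rop.
  + move=> sb s t H; pose m := maxn (bnd s) (bnd t).
    rewrite (@cls_subst m sb s) ?(@cls_subst m sb t).
    * by apply: Rq => // i; exact: Rr.
    * exact: vars_lt_mono (leq_maxr _ _) (vars_bnd t).
    * exact: vars_lt_mono (leq_maxl _ _) (vars_bnd s).
- move=> E HE HTE; split.
  + move=> x; exact: Trefl HE _.
  + move=> x y; exact: (@Tsym _ _ _ HE).
  + move=> x y z; exact: (@Ttrans _ _ _ HE).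
  + move=> o xs ys H; rewrite /Cl_op.
    have X1 := HTE _ _ (rep_cls (App o (fun i => rep (xs i)))).
    have X2 := HTE _ _ (Ts (rep_cls (App o (fun i => rep (ys i))))).
    apply: (Ttrans HE X1); apply: (Ttrans HE _ X2).
    exact: (@Tapp _ _ _ HE o).
  + move=> n x y bs cs Hxy H; rewrite /Cl_q.
    have X1 := HTE _ _ (rep_cls (subst (pad (fun i => rep (bs i)) Var) (rep x))).
    have X2 := HTE _ _ (Ts (rep_cls (subst (pad (fun i => rep (cs i)) Var) (rep y)))).
    apply: (Ttrans HE X1); apply: (Ttrans HE _ X2).
    apply: (Ttrans HE (Tsub HE _ Hxy)); apply: (subst_T_pt HE) => j.
    rewrite /pad; case: insubP => [i _ _|_]; [exact: H | exact: (Trefl HE (Var j))].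
- move=> R _; apply: functional_extensionality => x; apply: functional_extensionality => y.
  by rewrite !cls_rep.
- move=> E HE HTE; apply: functional_extensionality => s; apply: functional_extensionality => t.
  have X1 := HTE _ _ (rep_cls s); have X2 := HTE _ _ (rep_cls t).
  apply: propositional_extensionality; split=> H.
    exact: (Ttrans HE (Tsym HE X1) (Ttrans HE H X2)).
  exact: (Ttrans HE X1 (Ttrans HE H (Tsym HE X2))).
- move=> R R' _ _; split=> H.
    move=> s t; exact: H.
  move=> x y Hxy; rewrite -(cls_rep x) -(cls_rep y); apply: H; by rewrite !cls_rep.
Qed.

Definition hh (w : Fr T) : (nat -> Fr T) -> Fr T := fun s => eval (Cl_op T) s (rep w).

Lemma eval_Cl v t : eval (Cl_op T) v t = cls (subst (fun j => rep (v j)) t).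
Proof.
elim: t => [n|o ts IH] /=; first by rewrite cls_rep.
rewrite /Cl_op; apply/cls_eq; apply: (@Tapp _ _ _ HT o) => i; rewrite IH; exact: rep_cls.
Qed.

Lemma eval_T v {t t'} : T t t' -> eval (Cl_op T) v t = eval (Cl_op T) v t'.
Proof. rewrite !eval_Cl => H; apply/cls_eq; exact: Tsb _ H. Qed.

Lemma hh_id w : hh w (fun j => cls (Var j)) = w.
Proof.
rewrite /hh eval_Cl -[RHS]cls_rep; apply/cls_eq.
rewrite -[X in T _ X]subst_Var; apply: Tpt => j; exact: rep_cls.
Qed.

Lemma part5 : exists h : Fr T -> ((nat -> Fr T) -> Fr T),
     [/\ injective h,
         (forall phi, in_block (Cl_op T) phi <-> exists w, h w = phi),
         (forall o (ws : 'I_(ar o) -> Fr T),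
            h (Cl_op T o ws) = ff_op (Cl_op T) o (fun i => h (ws i))),
         (forall n (a : Fr T) (bs : 'I_n -> Fr T),
            h (Cl_q T n a bs) = ff_q n (h a) (fun i => h (bs i))) &
         (forall i, h (Cl_e T i) = ff_e i)].
Proof.
exists hh; split.
- move=> w w' E; by rewrite -(hh_id w) -(hh_id w') E.
- move=> phi; split.
  + case=> n [f [[k [t [Hnk Hvt Hf]]] ->]]; exists (cls t).
    apply: functional_extensionality => s; rewrite /hh /top (eval_T s (rep_cls t)).
    have := Hf (fun i : 'I_k => s i) s; by rewrite pad_id.
  + case=> w <-; exists (bnd (rep w)).
    exists (fun b : 'I_(bnd (rep w)) -> Fr T => eval (Cl_op T) (pad b (fun j => cls (Var j))) (rep w)).
    split.
      exists (bnd (rep w)), (rep w); split => //; first exact: vars_bnd.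
      move=> b d; apply: (@eval_ext_lt _ _ _ _ (bnd (rep w)) _ _ (rep w) (vars_bnd _)) => j Hj.
      by rewrite !(@pad_lt2 _ _ _ _ _ Hj).
    apply: functional_extensionality => s; rewrite /hh /top.
    apply: (@eval_ext_lt _ _ _ _ (bnd (rep w)) _ _ (rep w) (vars_bnd _)) => j Hj.
    by rewrite (@pad_lt2 _ _ _ _ _ Hj).
- move=> o ws; apply: functional_extensionality => s.
  by rewrite /hh /ff_op (eval_T s (rep_cls _)).
- move=> n a bs; apply: functional_extensionality => s.
  rewrite /hh /ff_q (eval_T s (rep_cls _)) eval_subst; congr eval.
  apply: functional_extensionality => j; rewrite /pad; by case: insubP.
- move=> i; apply: functional_extensionality => s.
  by rewrite /hh /ff_e (eval_T s (rep_cls _)).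
Qed.

End Main.

Theorem proposition10p3 (Op : Type) (ar : Op -> nat)
    (T : term Op ar -> term Op ar -> Prop) :
  is_eq_theory T ->
  (* (1) Cl(V) is a finite dimensional clone tau-algebra *)
  (is_clone_algebra (Cl_op T) (Cl_q T) (Cl_e T) /\
   finite_dimensional (Cl_q T) (Cl_e T)) /\
  (* (2) Con Cl(V) is isomorphic to L(T) *)
  (exists (f : (Fr T -> Fr T -> Prop) -> (term Op ar -> term Op ar -> Prop))
          (g : (term Op ar -> term Op ar -> Prop) -> (Fr T -> Fr T -> Prop)),
     [/\ (forall R, is_congruence (Cl_op T) (Cl_q T) R ->
            is_eq_theory (f R) /\ incl_rel T (f R)),
         (forall E, is_eq_theory E -> incl_rel T E ->
            is_congruence (Cl_op T) (Cl_q T) (g E)),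
         (forall R, is_congruence (Cl_op T) (Cl_q T) R -> g (f R) = R),
         (forall E, is_eq_theory E -> incl_rel T E -> f (g E) = E) &
         (forall R R', is_congruence (Cl_op T) (Cl_q T) R ->
            is_congruence (Cl_op T) (Cl_q T) R' ->
            (incl_rel R R' <-> incl_rel (f R) (f R')))]) /\
  (* (3) *)
  (forall (w : Fr T) (n : nat), 0 < n -> has_dim (Cl_q T) (Cl_e T) w n ->
     exists t : term Op ar, vars_lt n t /\ cls T t = w) /\
  (* (4) *)
  (forall w : Fr T, has_dim (Cl_q T) (Cl_e T) w 0 ->
     exists t : term Op ar, [/\ vars_lt 1 t, cls T t = w &
       eqV T t (subst (fun j => if j == 0 then Var 1 else Var j) t)]) /\
  (* (5) Cl(V) is isomorphic to (Clo F_V)^T *)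
  (exists h : Fr T -> ((nat -> Fr T) -> Fr T),
     [/\ injective h,
         (forall phi, in_block (Cl_op T) phi <-> exists w, h w = phi),
         (forall o (ws : 'I_(ar o) -> Fr T),
            h (Cl_op T o ws) = ff_op (Cl_op T) o (fun i => h (ws i))),
         (forall n (a : Fr T) (bs : 'I_n -> Fr T),
            h (Cl_q T n a bs) = ff_q n (h a) (fun i => h (bs i))) &
         (forall i, h (Cl_e T i) = ff_e i)]).
Proof.
move=> HT; split; first by split; [exact: cloneCl HT | exact: findim HT].
split; first exact: part2 HT.
split; first exact: part3 HT.
split; first exact: part4 HT.
exact: part5 HT.
Qed.
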